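(* Let $(X,Y,\tilde Y)$ be jointly distributed with $X\in\mathcal{X}$ and $Y,\tilde Y\in\{0,1\}$; let $Q$ be the distribution of $(X,Y)$ and $P$ the distribution of $(X,\tilde Y)$, so $P_X=Q_X$. Let $\eta_Q(x)=\Pr(Y=1\mid X=x)$, $\eta_P(x)=\Pr(\tilde Y=1\mid X=x)$ and $\rho_i(x)=\Pr(\tilde Y\ne i\mid Y=i,X=x)$ for $i\in\{0,1\}$. Suppose $\rho_1\equiv0$ and there is a strictly increasing function $\psi$ with $\rho_0(x)=\psi(\eta_Q(x))$ for all $x$. Then there exists a strictly increasing function $\phi$ such that $\eta_P(x)=\phi(\eta_Q(x))$ for all $x$. *)

(* Defs.v *)
From HB Require Import structures.
From mathcomp Require Import all_boot all_order all_algebra.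
From mathcomp Require Import reals.
Set Implicit Arguments. Unset Strict Implicit. Unset Printing Implicit Defensive.
Import Order.TTheory GRing.Theory Num.Theory.
Local Open Scope ring_scope.

(* A conditional law of (Y, Ytilde) given X = x, for every x : X:
   [pi x y yt] = Pr(Y = y, Ytilde = yt | X = x)  (true = label 1). *)

Definition etaQ {R : ringType} {X : Type} (pi : X -> bool -> bool -> R) (x : X) : R :=
  pi x true true + pi x true false.

Definition etaP {R : ringType} {X : Type} (pi : X -> bool -> bool -> R) (x : X) : R :=
  pi x true true + pi x false true.

(* Main.v *)
Require Import Defs.
From HB Require Import structures.
From mathcomp Require Import all_boot all_order all_algebra.
From mathcomp Require Import reals.
From mathcomp Require Import lra ring.
Import Order.TTheory GRing.Theory Num.Theory.
Local Open Scope ring_scope.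

Theorem lemma1 (R : realType) (X : Type) (pi : X -> bool -> bool -> R)
    (pi_ge0 : forall x y yt, 0 <= pi x y yt)
    (pi_sum1 : forall x, \sum_(y : bool) \sum_(yt : bool) pi x y yt = 1)
    (rho0 rho1 : X -> R)
    (rho0_01 : forall x, 0 <= rho0 x <= 1)
    (rho1_01 : forall x, 0 <= rho1 x <= 1)
    (* rho_1(x) = Pr(Ytilde <> 1 | Y = 1, X = x) *)
    (rho1_def : forall x, pi x true false = rho1 x * etaQ pi x)
    (* rho_0(x) = Pr(Ytilde <> 0 | Y = 0, X = x) *)
    (rho0_def : forall x, pi x false true = rho0 x * (1 - etaQ pi x))
    (rho1_0 : forall x, rho1 x = 0)
    (psi : R -> R)
    (psi_incr : {in `[0, 1] &, forall a b, a < b -> psi a < psi b})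
    (rho0_psi : forall x, rho0 x = psi (etaQ pi x)) :
  exists phi : R -> R,
    {in `[0, 1] &, forall a b, a < b -> phi a < phi b} /\
    (forall x, etaP pi x = phi (etaQ pi x)).
Proof.
exists (fun e => if psi e <= 1 then 1 - (1 - e) * (1 - psi e) else 1 + e).
split.
  move=> a b; rewrite !in_itv /= => /andP[a0 a1] /andP[b0 b1] ab.
  have pab := psi_incr a b.
  rewrite !in_itv /= a0 a1 b0 b1 in pab; have {}pab := pab erefl erefl ab.
  case: ifP => ha; case: ifP => hb.
  - have h1 : (1 - b) * (1 - psi a) < (1 - a) * (1 - psi a).
      by rewrite -subr_gt0 -mulrBl; apply: mulr_gt0; lra.
    have h2 : (1 - b) * (1 - psi b) <= (1 - b) * (1 - psi a).
      by apply: ler_wpM2l; lra.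
    lra.
  - have h0 : 0 <= (1 - a) * (1 - psi a) by apply: mulr_ge0; lra.
    move/negbT: hb; rewrite -ltNge => hb; lra.
  - move/negbT: ha; rewrite -ltNge => ha; lra.
  - lra.
move=> x.
have e1 := rho1_def x; rewrite rho1_0 mul0r in e1.
have e0 := rho0_def x; rewrite rho0_psi in e0.
have hr := rho0_01 x; rewrite rho0_psi in hr; case/andP: hr => _ ->.
rewrite /etaP e0 /etaQ e1; ring.
Qed.
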